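(* Let $\Bbbk$ be a field of characteristic $0$ and let $J$ be a special Jordan dialgebra such that $\bar J$ is a special Jordan algebra. Then $\widehat J=\bar J\oplus J$ is a special Jordan algebra.
   Context: An associative dialgebra is a vector space with bilinear $\vdash,\dashv$ satisfying $(x\dashv y)\vdash z=(x\vdash y)\vdash z$, $x\dashv(y\vdash z)=x\dashv(y\dashv z)$, $(x\vdash y)\vdash z=x\vdash(y\vdash z)$, $(x\dashv y)\dashv z=x\dashv(y\dashv z)$, $(x\vdash y)\dashv z=x\vdash(y\dashv z)$; $D^{(+)}$ is $D$ with $a\vdash_+b=\tfrac12(a\vdash b+b\dashv a)$, $a\dashv_+b=\tfrac12(a\dashv b+b\vdash a)$. A special Jordan dialgebra is a subdialgebra $J$ of some $D^{(+)}$. $\bar J=J/\mathrm{span}\{a\vdash_+b-a\dashv_+b\}$ is an ordinary algebra acting on $J$ by $\bar a\cdot v=a\vdash_+v$, $v\cdot\bar a=v\dashv_+a$; $\widehat J=\bar J\oplus J$ is the split null extension with product $(\bar a+m)(\bar b+n)=\bar a\bar b+(a\vdash_+n+m\dashv_+b)$. A Jordan algebra is special if it embeds into $A^{(+)}$ (product $\tfrac12(ab+ba)$) for an associative algebra $A$. *)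

(* Defs.v *)
From HB Require Import structures.
From mathcomp Require Import all_boot all_order all_algebra.
Set Implicit Arguments. Unset Strict Implicit. Unset Printing Implicit Defensive.
Import Order.TTheory GRing.Theory Num.Theory.
Local Open Scope ring_scope.

Section Defs.
Variable k : fieldType.

Definition bilinear_op (V : lmodType k) (op : V -> V -> V) : Prop :=
  (forall (a : k) (x y z : V), op (a *: x + y) z = a *: op x z + op y z) /\
  (forall (a : k) (x y z : V), op z (a *: x + y) = a *: op z x + op z y).

(* Associative dialgebra: l = |-, r = -| . *)
Definition assoc_dialgebra (V : lmodType k) (l r : V -> V -> V) : Prop :=
  [/\ bilinear_op l, bilinear_op r,
      (forall x y z, l (r x y) z = l (l x y) z),
      (forall x y z, r x (l y z) = r x (r y z)) &
      [/\ (forall x y z, l (l x y) z = l x (l y z)),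
          (forall x y z, r (r x y) z = r x (r y z)) &
          (forall x y z, r (l x y) z = l x (r y z))]].

Definition half : k := (2%:R : k)^-1.

Definition plus_left (V : lmodType k) (l r : V -> V -> V) (a b : V) : V :=
  half *: (l a b + r b a).
Definition plus_right (V : lmodType k) (l r : V -> V -> V) (a b : V) : V :=
  half *: (r a b + l b a).

Definition special_jordan_dialgebra (J : lmodType k) (lj rj : J -> J -> J) : Prop :=
  exists (D : lmodType k) (l r : D -> D -> D) (f : {linear J -> D}),
    [/\ assoc_dialgebra l r, injective f &
        forall a b, f (lj a b) = plus_left l r (f a) (f b) /\
                    f (rj a b) = plus_right l r (f a) (f b)].

Definition assoc_algebra (A : lmodType k) (m : A -> A -> A) : Prop :=
  bilinear_op m /\ associative m.

Definition special_jordan_algebra (V : lmodType k) (mul : V -> V -> V) : Prop :=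
  exists (A : lmodType k) (m : A -> A -> A) (f : {linear V -> A}),
    [/\ assoc_algebra m, injective f &
        forall x y, f (mul x y) = half *: (m (f x) (f y) + m (f y) (f x))].

Definition dispan (J : lmodType k) (lj rj : J -> J -> J) (v : J) : Prop :=
  exists (n : nat) (c : 'I_n -> k) (a b : 'I_n -> J),
    v = \sum_(i < n) c i *: (lj (a i) (b i) - rj (a i) (b i)).

Definition hat_mul (B J : lmodType k) (mulb : B -> B -> B)
  (actL : B -> J -> J) (actR : J -> B -> J) (x y : B * J) : B * J :=
  (mulb x.1 y.1, actL x.1 y.2 + actR x.2 y.1).

End Defs.

(* Main.v *)
Require Import Defs.
From HB Require Import structures.
From mathcomp Require Import all_boot all_order all_algebra.
From Stdlib Require Import ClassicalEpsilon FunctionalExtensionality PropExtensionality.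
Set Implicit Arguments. Unset Strict Implicit.
Import GRing.Theory.
Local Open Scope ring_scope.

Section Quot.
Variable k : fieldType.
Variable V : lmodType k.
Record subsp := Subsp { sp : V -> Prop; sp0 : sp 0;
  splin : forall c u v, sp u -> sp v -> sp (c *: u + v) }.
Variable S : subsp.
Lemma spD u v : sp S u -> sp S v -> sp S (u + v).
Proof. by move=> hu hv; have := splin 1 hu hv; rewrite scale1r. Qed.
Lemma spZ (c : k) (u : V) : sp S u -> sp S (c *: u).
Proof. by move=> hu; have := splin c hu (sp0 S); rewrite addr0. Qed.
Lemma spN u : sp S u -> sp S (- u).
Proof. by move=> hu; have := spZ (-1) hu; rewrite scaleN1r. Qed.
Lemma spB u v : sp S u -> sp S v -> sp S (u - v).
Proof. by move=> hu hv; apply: spD => //; apply: spN. Qed.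

Definition canon (x : V) : V := epsilon (inhabits 0) (fun y => sp S (y - x)).
Lemma canon_spec x : sp S (canon x - x).
Proof. apply: (epsilon_spec (inhabits 0) (fun y => sp S (y - x))); exists x; rewrite subrr; exact: sp0. Qed.
Lemma canon_eq x y : sp S (x - y) -> canon x = canon y.
Proof.
move=> h; rewrite /canon; f_equal; apply: functional_extensionality => z.
apply: propositional_extensionality; split => hz.
  by have := spD hz h; rewrite addrA subrK.
by have := spB hz h; rewrite opprB addrA subrK.
Qed.
Lemma canon_idem x : canon (canon x) = canon x.
Proof. exact/canon_eq/canon_spec. Qed.

Record quot := MkQ { qval : V; qvalP : canon qval == qval }.
HB.instance Definition _ := [isSub for qval].
HB.instance Definition _ := [Choice of quot by <:].

Definition cls (x : V) : quot := @MkQ (canon x) (introT eqP (canon_idem x)).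
Lemma qval_cls x : qval (cls x) = canon x. Proof. by []. Qed.
Lemma clsE x y : sp S (x - y) <-> cls x = cls y.
Proof.
split=> [h|h]; first by apply: val_inj; rewrite /= (canon_eq h).
have e : canon x = canon y by have := congr1 qval h.
have := spB (canon_spec y) (canon_spec x).
by rewrite e opprB addrC addrA subrK.
Qed.
Lemma qvalK q : cls (qval q) = q.
Proof. by apply: val_inj => /=; apply/eqP; case: q. Qed.
Lemma cls_surj q : exists x, q = cls x.
Proof. by exists (qval q); rewrite qvalK. Qed.
Lemma cls_sp x : sp S (qval (cls x) - x).
Proof. exact: canon_spec. Qed.

Definition qzero := cls 0.
Definition qadd p q := cls (qval p + qval q).
Definition qopp q := cls (- qval q).
Definition qscale c q := cls (c *: qval q).
Lemma qaddE x y : qadd (cls x) (cls y) = cls (x + y).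
Proof.
apply/clsE; have := spD (cls_sp x) (cls_sp y).
by rewrite opprD addrACA.
Qed.
Lemma qoppE x : qopp (cls x) = cls (- x).
Proof. by apply/clsE; have := spN (cls_sp x); rewrite opprB opprK addrC. Qed.
Lemma qscaleE c x : qscale c (cls x) = cls (c *: x).
Proof. by apply/clsE; have := spZ c (cls_sp x); rewrite scalerBr. Qed.

Lemma qaddA : associative qadd.
Proof.
move=> p q r; case: (cls_surj p) => [x ->]; case: (cls_surj q) => [y ->].
by case: (cls_surj r) => [z ->]; rewrite !qaddE addrA.
Qed.
Lemma qaddC : commutative qadd.
Proof.
move=> p q; case: (cls_surj p) => [x ->]; case: (cls_surj q) => [y ->].
by rewrite !qaddE addrC.
Qed.
Lemma qadd0 : left_id qzero qadd.
Proof. by move=> p; case: (cls_surj p) => [x ->]; rewrite qaddE add0r. Qed.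
Lemma qaddN : left_inverse qzero qopp qadd.
Proof. by move=> p; case: (cls_surj p) => [x ->]; rewrite qoppE qaddE addNr. Qed.
HB.instance Definition _ := GRing.isZmodule.Build quot qaddA qaddC qadd0 qaddN.

Lemma clsD x y : cls (x + y) = cls x + cls y.
Proof. by rewrite -qaddE. Qed.
Lemma cls0 : cls 0 = 0. Proof. by []. Qed.

Lemma qscaleA a b q : qscale a (qscale b q) = qscale (a * b) q.
Proof. by case: (cls_surj q) => [x ->]; rewrite !qscaleE scalerA. Qed.
Lemma qscale1 : left_id 1 qscale.
Proof. by move=> q; case: (cls_surj q) => [x ->]; rewrite qscaleE scale1r. Qed.
Lemma qscaleDr : right_distributive qscale +%R.
Proof.
move=> a p q; case: (cls_surj p) => [x ->]; case: (cls_surj q) => [y ->].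
by rewrite -[cls x + cls y]clsD !qscaleE -clsD scalerDr.
Qed.
Lemma qscaleDl q : {morph qscale^~ q : a b / a + b}.
Proof.
move=> a b; case: (cls_surj q) => [x ->].
by rewrite !qscaleE -clsD scalerDl.
Qed.
HB.instance Definition _ := GRing.Zmodule_isLmodule.Build k quot qscaleA qscale1 qscaleDr qscaleDl.

Lemma clsZ c x : cls (c *: x) = c *: cls x.
Proof. by rewrite -qscaleE. Qed.
Lemma clsL c x y : cls (c *: x + y) = c *: cls x + cls y.
Proof. by rewrite clsD clsZ. Qed.
End Quot.

Section Bil.
Variables (k : fieldType) (V : lmodType k) (op : V -> V -> V).
Hypothesis H : bilinear_op op.
Lemma opL c x y z : op (c *: x + y) z = c *: op x z + op y z.
Proof. exact: H.1. Qed.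
Lemma opR c x y z : op z (c *: x + y) = c *: op z x + op z y.
Proof. exact: H.2. Qed.
Lemma op0l z : op 0 z = 0.
Proof.
have h := opL 1 0 0 z; rewrite !scale1r addr0 in h.
have: op 0 z + op 0 z = op 0 z + 0 by rewrite addr0 -h.
by move/addrI.
Qed.
Lemma op0r z : op z 0 = 0.
Proof.
have h := opR 1 0 0 z; rewrite !scale1r addr0 in h.
have: op z 0 + op z 0 = op z 0 + 0 by rewrite addr0 -h.
by move/addrI.
Qed.
Lemma opDl x y z : op (x + y) z = op x z + op y z.
Proof. by have := opL 1 x y z; rewrite !scale1r. Qed.
Lemma opDr x y z : op z (x + y) = op z x + op z y.
Proof. by have := opR 1 x y z; rewrite !scale1r. Qed.
Lemma opZl c x z : op (c *: x) z = c *: op x z.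
Proof. by have := opL c x 0 z; rewrite !addr0 op0l addr0. Qed.
Lemma opZr c x z : op z (c *: x) = c *: op z x.
Proof. by have := opR c x 0 z; rewrite !addr0 op0r addr0. Qed.
Lemma opNl x z : op (- x) z = - op x z.
Proof. by rewrite -scaleN1r opZl scaleN1r. Qed.
Lemma opNr x z : op z (- x) = - op z x.
Proof. by rewrite -scaleN1r opZr scaleN1r. Qed.
Lemma opBl x y z : op (x - y) z = op x z - op y z.
Proof. by rewrite opDl opNl. Qed.
Lemma opBr x y z : op z (x - y) = op z x - op z y.
Proof. by rewrite opDr opNr. Qed.
End Bil.

Section Hat.
Variables (k : fieldType) (D : lmodType k) (l r : D -> D -> D).

Inductive Sd : D -> Prop :=
| Sd0 : Sd 0
| Sdg a b : Sd (l a b - r a b)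
| Sdl c u v : Sd u -> Sd v -> Sd (c *: u + v).

Definition SdS : subsp D := @Subsp k D Sd Sd0 Sdl.
Definition Dbar := quot SdS.
Definition cl (x : D) : Dbar := cls SdS x.

Lemma SdD u v : Sd u -> Sd v -> Sd (u + v).
Proof. exact: (@spD _ _ SdS). Qed.
Lemma SdZ c u : Sd u -> Sd (c *: u).
Proof. exact: (@spZ _ _ SdS). Qed.
Lemma SdN u : Sd u -> Sd (- u).
Proof. exact: (@spN _ _ SdS). Qed.

Lemma clE x y : Sd (x - y) -> cl x = cl y.
Proof. exact: (@clsE _ _ SdS x y).1. Qed.
Lemma cl_sp x : Sd (qval (cl x) - x).
Proof. exact: (@cls_sp _ _ SdS). Qed.
Lemma cl_surj (q : Dbar) : exists x, q = cl x.
Proof. exact: cls_surj. Qed.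
Lemma clL c x y : cl (c *: x + y) = c *: cl x + cl y.
Proof. exact: clsL. Qed.
Lemma clD x y : cl (x + y) = cl x + cl y.
Proof. exact: clsD. Qed.
Lemma clZ c x : cl (c *: x) = c *: cl x.
Proof. exact: clsZ. Qed.

Lemma dispan_Sd (J : lmodType k) (lj rj : J -> J -> J) (f : {linear J -> D})
  (Hf : forall a b, f (lj a b) = plus_left l r (f a) (f b) /\
                    f (rj a b) = plus_right l r (f a) (f b)) v :
  dispan lj rj v -> Sd (f v).
Proof.
case=> n [c [a [b ->]]]; rewrite linear_sum.
apply: big_ind => [|x y|i _]; [exact: Sd0 | exact: SdD | ].
rewrite linearZ linearB (Hf _ _).1 (Hf _ _).2 /plus_left /plus_right -scalerBr.
apply: SdZ; apply: SdZ; rewrite opprD addrACA; apply: SdD; first exact: Sdg.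
by have := SdN (Sdg (f (b i)) (f (a i))); rewrite opprB.
Qed.

Hypothesis HD : assoc_dialgebra l r.
Lemma hl : bilinear_op l. Proof. by case: HD. Qed.
Lemma hr : bilinear_op r. Proof. by case: HD. Qed.
Lemma A1 x y z : l (r x y) z = l (l x y) z. Proof. by case: HD. Qed.
Lemma A2 x y z : r x (l y z) = r x (r y z). Proof. by case: HD. Qed.
Lemma A3 x y z : l (l x y) z = l x (l y z). Proof. by case: HD => _ _ _ _ []. Qed.
Lemma A4 x y z : r (r x y) z = r x (r y z). Proof. by case: HD => _ _ _ _ []. Qed.
Lemma A5 x y z : r (l x y) z = l x (r y z). Proof. by case: HD => _ _ _ _ []. Qed.

Lemma Sd_l0 s z : Sd s -> l s z = 0.
Proof.
elim=> [|a b|c u v _ IHu _ IHv]; first exact: op0l hl _.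
  by rewrite (opBl hl) A1 subrr.
by rewrite (opL hl) IHu IHv scaler0 addr0.
Qed.
Lemma Sd_r0 s z : Sd s -> r z s = 0.
Proof.
elim=> [|a b|c u v _ IHu _ IHv]; first exact: op0r hr _.
  by rewrite (opBr hr) A2 subrr.
by rewrite (opR hr) IHu IHv scaler0 addr0.
Qed.
Lemma Sd_lz s z : Sd s -> Sd (l z s).
Proof.
elim=> [|a b|c u v _ IHu _ IHv]; first by rewrite (op0r hl); exact: Sd0.
  by rewrite (opBr hl) -A3 -A5; exact: Sdg.
by rewrite (opR hl); exact: Sdl.
Qed.

Definition mulbar (u v : Dbar) : Dbar := cl (l (qval u) (qval v)).
Definition actl (u : Dbar) (d : D) : D := l (qval u) d.
Definition actr (d : D) (u : Dbar) : D := r d (qval u).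

Lemma mulbar_cls x y : mulbar (cl x) (cl y) = cl (l x y).
Proof.
apply: clE; have hx := cl_sp x; have hy := cl_sp y.
set cx := qval (cl x) in hx *; set cy := qval (cl y) in hy *.
have -> : l cx cy - l x y = l (cx - x) cy + l x (cy - y).
  by rewrite (opBl hl) (opBr hl) addrA subrK.
by rewrite (Sd_l0 _ hx) add0r; exact: Sd_lz.
Qed.
Lemma actl_cls x d : actl (cl x) d = l x d.
Proof. by apply/eqP; rewrite -subr_eq0 /actl -(opBl hl) (Sd_l0 _ (cl_sp x)). Qed.
Lemma actr_cls x d : actr d (cl x) = r d x.
Proof. by apply/eqP; rewrite -subr_eq0 /actr -(opBr hr) (Sd_r0 _ (cl_sp x)). Qed.
Lemma cl_rl x y : cl (r x y) = cl (l x y).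
Proof. by apply: clE; have := SdN (Sdg x y); rewrite opprB. Qed.

Lemma mulbarL c u u' v : mulbar (c *: u + u') v = c *: mulbar u v + mulbar u' v.
Proof.
case: (cl_surj u) => x ->; case: (cl_surj u') => x' ->; case: (cl_surj v) => y ->.
by rewrite -clL !mulbar_cls (opL hl) clL.
Qed.
Lemma mulbarR c u u' v : mulbar v (c *: u + u') = c *: mulbar v u + mulbar v u'.
Proof.
case: (cl_surj u) => x ->; case: (cl_surj u') => x' ->; case: (cl_surj v) => y ->.
by rewrite -clL !mulbar_cls (opR hl) clL.
Qed.
Lemma actlL c u u' n : actl (c *: u + u') n = c *: actl u n + actl u' n.
Proof.
case: (cl_surj u) => x ->; case: (cl_surj u') => x' ->.
by rewrite -clL !actl_cls (opL hl).
Qed.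
Lemma actlR c u n n' : actl u (c *: n + n') = c *: actl u n + actl u n'.
Proof. exact: (opR hl). Qed.
Lemma actrL c m m' u : actr (c *: m + m') u = c *: actr m u + actr m' u.
Proof. exact: (opL hr). Qed.
Lemma actrR c m u u' : actr m (c *: u + u') = c *: actr m u + actr m u'.
Proof.
case: (cl_surj u) => x ->; case: (cl_surj u') => x' ->.
by rewrite -clL !actr_cls (opR hr).
Qed.

Variables (A : lmodType k) (mA : A -> A -> A).
Hypothesis HA : assoc_algebra mA.

Definition MM := (A * (Dbar * D))%type.
Definition mulM (x y : MM) : MM :=
  (mA x.1 y.1, (mulbar x.2.1 y.2.1, actl x.2.1 y.2.2 + actr x.2.2 y.2.1)).

Lemma mulM_assoc : assoc_algebra mulM.
Proof.
case: HA => [[HAl HAr] HAa].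
split; first split.
- move=> c [x1 [x2 x3]] [y1 [y2 y3]] [z1 [z2 z3]] /=.
  congr (_, (_, _)); first exact: HAl.
    exact: mulbarL.
  by rewrite actlL actrL /mulM /= scalerDr addrACA.
- move=> c [x1 [x2 x3]] [y1 [y2 y3]] [z1 [z2 z3]] /=.
  congr (_, (_, _)); first exact: HAr.
    exact: mulbarR.
  by rewrite actlR actrR /mulM /= scalerDr addrACA.
move=> [x1 [x2 x3]] [y1 [y2 y3]] [z1 [z2 z3]] /=.
rewrite /mulM /=; congr (_, (_, _)); first exact: HAa.
  case: (cl_surj x2) => a ->; case: (cl_surj y2) => b ->; case: (cl_surj z2) => c ->.
  by rewrite !mulbar_cls A3.
case: (cl_surj x2) => a ->; case: (cl_surj y2) => b ->; case: (cl_surj z2) => c ->.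
rewrite !mulbar_cls !actl_cls !actr_cls.
rewrite (opDr hl) (opDl hr) A3 -A5 A2 A4 !addrA; congr (_ + _ + _).
Qed.
End Hat.

Definition mkLin (k : fieldType) (U V : lmodType k) (F : U -> V)
  (H : linear F) : {linear U -> V} :=
  HB.pack F (GRing.isLinear.Build k U V *:%R F H).

Theorem mainTheorem19 (k : fieldType) (hk : [pchar k] =i pred0)
  (J : lmodType k) (lj rj : J -> J -> J)
  (HJ : special_jordan_dialgebra lj rj)
  (Jbar : lmodType k) (pi : {linear J -> Jbar})
  (pi_surj : forall x : Jbar, exists a : J, pi a = x)
  (pi_ker : forall v : J, pi v = 0 <-> dispan lj rj v)
  (mulb : Jbar -> Jbar -> Jbar)
  (Hmulb : forall a b : J, mulb (pi a) (pi b) = pi (lj a b))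
  (actL : Jbar -> J -> J) (HactL : forall a v : J, actL (pi a) v = lj a v)
  (actR : J -> Jbar -> J) (HactR : forall v a : J, actR v (pi a) = rj v a)
  (Hbar : special_jordan_algebra mulb) :
  special_jordan_algebra (V := (Jbar * J)%type) (hat_mul mulb actL actR).
Proof.
case: HJ => D [l [r [f [HD finj Hf]]]].
case: Hbar => A [mA [fA [HA fAinj HfA]]].
pose lift (x : Jbar) : J :=
  proj1_sig (constructive_indefinite_description _ (pi_surj x)).
have liftK x : pi (lift x) = x by rewrite /lift; case: constructive_indefinite_description.
pose g (x : Jbar) : Dbar l r := cl l r (f (lift x)).
have g_pi a : g (pi a) = cl l r (f a).
  apply: clE; rewrite -linearB; apply: (dispan_Sd Hf); apply/pi_ker.
  by rewrite linearB liftK subrr.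
have g_lin : linear g.
  move=> c x y; rewrite -[in LHS](liftK x) -[in LHS](liftK y) -linearP g_pi.
  by rewrite linearP clL.
pose F (p : (Jbar * J)%type) : MM l r A := (fA p.1, (g p.1, f p.2)).
have F_lin : linear F.
  move=> c [x1 x2] [y1 y2]; rewrite /F /=.
  by congr (_, (_, _)); rewrite ?linearP ?g_lin.
exists (MM l r A), (@mulM _ _ l r A mA), (mkLin F_lin); split.
- exact: mulM_assoc.
- move=> [x1 x2] [y1 y2] /= [e1 e2 e3].
  by rewrite (fAinj _ _ e1) (finj _ _ e3).
move=> [xb m] [yb n].
case: (pi_surj xb) => a <-; case: (pi_surj yb) => b <-.
rewrite /= /F /hat_mul /mulM /=.
congr (_, (_, _)).
- exact: HfA.
- rewrite Hmulb !g_pi !mulbar_cls // (Hf a b).1 /plus_left clZ clD cl_rl //.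
- rewrite HactL HactR linearD (Hf a n).1 (Hf m b).2 !g_pi !actl_cls // !actr_cls //.
  rewrite /plus_left /plus_right -scalerDr; congr (_ *: _).
  by rewrite addrACA [r (f n) _ + _]addrC.
Qed.
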